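(* Let $\pi\in\mathfrak{S}_n$ avoid $132$, and let $\{a,b,c\}$ and $\{d,e,f\}$ be the element sets of two $3$-cycles of $\pi$, with $a<b<c$, $d<e<f$ and $a<d$. Then one of the following holds: (A) $a<d<b<e<c<f$; (B) $a<d<e<b<f<c$; (C) $a<d<e<f<b<c$. Furthermore, if one of the two $3$-cycles is of form $(1,2,3)$ and the other is of form $(1,3,2)$, then configuration (C) holds.
   Context: A permutation avoids $132$ if there are no indices $i<j<k$ with $\pi_i<\pi_k<\pi_j$. A $3$-cycle on elements $a<b<c$ is of form $(1,2,3)$ if it is $(a,b,c)$, i.e. $a\mapsto b\mapsto c\mapsto a$, and of form $(1,3,2)$ if it is $(a,c,b)$, i.e. $a\mapsto c\mapsto b\mapsto a$. *)

(* Defs.v *)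
From mathcomp Require Import all_boot all_order all_fingroup.
Set Implicit Arguments. Unset Strict Implicit. Unset Printing Implicit Defensive.

Definition avoids132 (n : nat) (s : {perm 'I_n}) : Prop :=
  ~ exists i j k : 'I_n, [/\ i < j, j < k & (s i < s k < s j)%N].

Definition cycle123 (n : nat) (s : {perm 'I_n}) (a b c : 'I_n) : Prop :=
  [/\ (a < b < c)%N, s a = b, s b = c & s c = a].

Definition cycle132 (n : nat) (s : {perm 'I_n}) (a b c : 'I_n) : Prop :=
  [/\ (a < b < c)%N, s a = c, s c = b & s b = a].

Definition is3cycle (n : nat) (s : {perm 'I_n}) (a b c : 'I_n) : Prop :=
  cycle123 s a b c \/ cycle132 s a b c.

(* Main.v *)
Require Import Defs.
From mathcomp Require Import all_boot all_order all_fingroup.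
From mathcomp Require Import zify.

Lemma tri3 {n} (x y : 'I_n) : (x < y)%N \/ (y < x)%N \/ x = y.
Proof. case: (ltngtP x y) => [?|?|/val_inj]; auto. Qed.

Theorem lemma4p1 (n : nat) (s : {perm 'I_n}) (a b c d e f : 'I_n) :
  avoids132 s ->
  (a < b < c)%N -> (d < e < f)%N -> (a < d)%N ->
  is3cycle s a b c -> is3cycle s d e f ->
  [\/ [&& a < d, d < b, b < e, e < c & c < f]%N,
      [&& a < d, d < e, e < b, b < f & f < c]%N
    | [&& a < d, d < e, e < f, f < b & b < c]%N ] /\
  ((cycle123 s a b c /\ cycle132 s d e f) \/
   (cycle132 s a b c /\ cycle123 s d e f) ->
   [&& a < d, d < e, e < f, f < b & b < c]%N).
Proof.
move=> Hav0 /andP[hab hbc] /andP[hde hef] had.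
have Hav : forall i j k : 'I_n, (i < j)%N -> (j < k)%N -> (s i < s k)%N -> (s k < s j)%N -> False.
  by move=> i j k h1 h2 h3 h4; apply: Hav0; exists i, j, k; split => //; rewrite h3 h4.
Ltac rw := repeat match goal with H : fun_of_perm _ ?x = _ |- context[fun_of_perm _ ?x] => rewrite H end.
Ltac neq s E := exfalso; move: (congr1 s E) (congr1 (fun z => s (s z)) E) => /=; rw;
   move=> /(congr1 (@nat_of_ord _)) ? /(congr1 (@nat_of_ord _)) ?; lia.
Ltac tri Hav x y z := solve [exfalso; apply: (Hav x y z); rw; lia].
Ltac contr := match goal with H1 : (fun_of_perm ?s ?x = ?y), H2 : (fun_of_perm ?s ?x = ?z) |- _ =>
   let E := fresh in have E := etrans (esym H1) H2;
   move/(congr1 (@nat_of_ord _)): E => E; exfalso; lia end.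
Ltac fin Hav a b c d e f := first [ first [ tri Hav a b c | tri Hav a b d | tri Hav a b e | tri Hav a b f | tri Hav a c b | tri Hav a c d | tri Hav a c e | tri Hav a c f | tri Hav a d b | tri Hav a d c | tri Hav a d e | tri Hav a d f | tri Hav a e b | tri Hav a e c | tri Hav a e d | tri Hav a e f | tri Hav a f b | tri Hav a f c | tri Hav a f d | tri Hav a f e | tri Hav b a c | tri Hav b a d | tri Hav b a e | tri Hav b a f | tri Hav b c a | tri Hav b c d | tri Hav b c e | tri Hav b c f | tri Hav b d a | tri Hav b d c | tri Hav b d e | tri Hav b d f | tri Hav b e a | tri Hav b e c | tri Hav b e d | tri Hav b e f | tri Hav b f a | tri Hav b f c | tri Hav b f d | tri Hav b f e | tri Hav c a b | tri Hav c a d | tri Hav c a e | tri Hav c a f | tri Hav c b a | tri Hav c b d | tri Hav c b e | tri Hav c b f | tri Hav c d a | tri Hav c d b | tri Hav c d e | tri Hav c d f | tri Hav c e a | tri Hav c e b | tri Hav c e d | tri Hav c e f | tri Hav c f a | tri Hav c f b | tri Hav c f d | tri Hav c f e | tri Hav d a b | tri Hav d a c | tri Hav d a e | tri Hav d a f | tri Hav d b a | tri Hav d b c | tri Hav d b e | tri Hav d b f | tri Hav d c a | tri Hav d c b | tri Hav d c e | tri Hav d c f | tri Hav d e a | tri Hav d e b | tri Hav d e c | tri Hav d e f | tri Hav d f a | tri Hav d f b | tri Hav d f c | tri Hav d f e | tri Hav e a b | tri Hav e a c | tri Hav e a d | tri Hav e a f | tri Hav e b a | tri Hav e b c | tri Hav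 e b d | tri Hav e b f | tri Hav e c a | tri Hav e c b | tri Hav e c d | tri Hav e c f | tri Hav e d a | tri Hav e d b | tri Hav e d c | tri Hav e d f | tri Hav e f a | tri Hav e f b | tri Hav e f c | tri Hav e f d | tri Hav f a b | tri Hav f a c | tri Hav f a d | tri Hav f a e | tri Hav f b a | tri Hav f b c | tri Hav f b d | tri Hav f b e | tri Hav f c a | tri Hav f c b | tri Hav f c d | tri Hav f c e | tri Hav f d a | tri Hav f d b | tri Hav f d c | tri Hav f d e | tri Hav f e a | tri Hav f e b | tri Hav f e c | tri Hav f e d ] | split; [ first [ apply Or31; apply/and5P; split; lia
   | apply Or32; apply/and5P; split; lia | apply Or33; apply/and5P; split; lia ]
   | case=> [[[? ? ? ?] [? ? ? ?]]|[[? ? ? ?] [? ? ? ?]]]; first [ contr | apply/and5P; split; lia ] ] ].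
case=> [][_ ea eb ec]; case=> [][_ ed ee ef].
all: case: (tri3 b d) => [?|[?|E]]; [| | neq s E]; try (exfalso; lia).
all: case: (tri3 b e) => [?|[?|E]]; [| | neq s E]; try (exfalso; lia).
all: case: (tri3 b f) => [?|[?|E]]; [| | neq s E]; try (exfalso; lia).
all: case: (tri3 c d) => [?|[?|E]]; [| | neq s E]; try (exfalso; lia).
all: case: (tri3 c e) => [?|[?|E]]; [| | neq s E]; try (exfalso; lia).
all: case: (tri3 c f) => [?|[?|E]]; [| | neq s E]; try (exfalso; lia).

all: fin Hav a b c d e f.
Qed.
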